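(* Let $X\subset\mathcal M=\mathbb R^4$ be a timelike straight line. Let $\mathtt{Aut}^{\rm c}_X$ be the subgroup of $\mathtt{Aut}^{\rm c}$ consisting of those $f$ with $f(X)=X$. Let $S$ be a non-trivial $\mathtt{Aut}^{\rm c}_X$-invariant equivalence relation on $\mathcal M$. Suppose there exist $p\in X$ and $q\notin X$ with $S(p,q)$. Then $S$ is standard Einstein simultaneity relative to $X$: for all $r,s\in\mathcal M$, $S(r,s)$ holds iff $\eta(s-r,u)=0$, where $u$ is a direction vector of $X$. Equivalently, the equivalence classes are exactly the hyperplanes Minkowski-orthogonal to $X$.
   Context: Spacetime is $\mathcal M=\mathbb R^4$, with points $(t,\vec x)$, equipped with the Minkowski bilinear form $\eta(x,y)=x^0y^0-x^1y^1-x^2y^2-x^3y^3$. A straight line is timelike if its direction vector $u$ satisfies $\eta(u,u)>0$. $\mathtt{Aut}^{\rm c}$ (the causal automorphism group) is the group of all bijections $f$ of $\mathbb R^4$ such that, for all $p,q$, $\eta(p-q,p-q)\ge0$ iff $\eta(f(p)-f(q),f(p)-f(q))\ge0$. Equivalently (a result of Alexandrov), $\mathtt{Aut}^{\rm c}$ is the group generated by: - the maps $p\mapsto Lp+a$ with $a\in\mathbb R^4$ and $L$ a real $4\times4$ matrix with $L\eta L^{\top}=\eta$, $\det L=1$, $L^0{}_0\ge1$; - the time reflection $(t,\vec x)\mapsto(-t,\vec x)$; - the space reflection $(t,\vec x)\mapsto(t,-\vec x)$; - the dilatations $p\mapsto\lambda p$ with $\lambda>0$. An equivalence relation $S$ is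 $G$-invariant if $S(p,q)\Leftrightarrow S(g\cdot p,g\cdot q)$ for all $g\in G$ and all $p,q$. It is non-trivial if it is neither the one-class relation nor the equality relation. *)

(* Defs.v *)
From Stdlib Require Import Reals.
Open Scope R_scope.

(* Points of Minkowski space M = R^4, coordinates (t, x1, x2, x3). *)
Record pt := mkpt { c0 : R; c1 : R; c2 : R; c3 : R }.

Definition padd (p q : pt) : pt :=
  mkpt (c0 p + c0 q) (c1 p + c1 q) (c2 p + c2 q) (c3 p + c3 q).
Definition psub (p q : pt) : pt :=
  mkpt (c0 p - c0 q) (c1 p - c1 q) (c2 p - c2 q) (c3 p - c3 q).
Definition pscale (k : R) (p : pt) : pt :=
  mkpt (k * c0 p) (k * c1 p) (k * c2 p) (k * c3 p).

Definition eta (x y : pt) : R :=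
  c0 x * c0 y - c1 x * c1 y - c2 x * c2 y - c3 x * c3 y.

Definition causal (p q : pt) : Prop := eta (psub p q) (psub p q) >= 0.

Definition bijective_map (f : pt -> pt) : Prop :=
  (forall x y, f x = f y -> x = y) /\ (forall y, exists x, f x = y).

Definition AutC (f : pt -> pt) : Prop :=
  bijective_map f /\ (forall p q, causal p q <-> causal (f p) (f q)).

Definition line (a u : pt) : pt -> Prop :=
  fun p => exists t : R, p = padd a (pscale t u).

Definition timelike (u : pt) : Prop := eta u u > 0.

Definition maps_onto_itself (f : pt -> pt) (X : pt -> Prop) : Prop :=
  (forall p, X p -> X (f p)) /\ (forall q, X q -> exists p, X p /\ f p = q).

Definition AutC_X (X : pt -> Prop) (f : pt -> pt) : Prop :=
  AutC f /\ maps_onto_itself f X.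

Definition equivalence_rel (S : pt -> pt -> Prop) : Prop :=
  (forall p, S p p) /\ (forall p q, S p q -> S q p) /\
  (forall p q r, S p q -> S q r -> S p r).

Definition invariant (G : (pt -> pt) -> Prop) (S : pt -> pt -> Prop) : Prop :=
  forall g, G g -> forall p q, S p q <-> S (g p) (g q).

Definition nontrivial (S : pt -> pt -> Prop) : Prop :=
  ~ (forall p q, S p q) /\ ~ (forall p q, S p q <-> p = q).

(* Main.v *)
From Stdlib Require Import Reals Lra Psatz Classical.
Require Import Defs.
Open Scope R_scope.

Lemma pt_eq x y: c0 x = c0 y -> c1 x = c1 y -> c2 x = c2 y -> c3 x = c3 y -> x = y.
Proof. destruct x, y; simpl; intros; subst; reflexivity. Qed.

Ltac crush := repeat match goal with p : pt |- _ => destruct p end;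
  unfold eta, psub, padd, pscale in *; simpl in *.

Definition refl (c n z : pt) := psub z (pscale (2 * eta (psub z c) n / eta n n) n).
Definition dil (c : pt) (l : R) (z : pt) := padd c (pscale l (psub z c)).
Definition trans (v z : pt) := padd z v.

Lemma refl_invol c n z: eta n n <> 0 -> refl c n (refl c n z) = z.
Proof. intros H. unfold refl. crush. apply pt_eq; simpl; field; auto. Qed.

Lemma refl_eta c n p q: eta n n <> 0 ->
  eta (psub (refl c n p) (refl c n q)) (psub (refl c n p) (refl c n q)) = 1 * eta (psub p q) (psub p q).
Proof. intros H. unfold refl. crush. field; auto. Qed.

Lemma dil_invol c l z: l <> 0 -> dil c l (dil c (/l) z) = z.
Proof. intros H. unfold dil. crush. apply pt_eq; simpl; field; auto. Qed.

Lemma dil_eta c l p q: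
  eta (psub (dil c l p) (dil c l q)) (psub (dil c l p) (dil c l q)) = (l*l) * eta (psub p q) (psub p q).
Proof. unfold dil. crush. ring. Qed.

Lemma trans_invol v z: trans v (trans (pscale (-1) v) z) = z.
Proof. unfold trans. crush. apply pt_eq; simpl; ring. Qed.
Lemma trans_invol' v z: trans (pscale (-1) v) (trans v z) = z.
Proof. unfold trans. crush. apply pt_eq; simpl; ring. Qed.
Lemma trans_eta v p q:
  eta (psub (trans v p) (trans v q)) (psub (trans v p) (trans v q)) = 1 * eta (psub p q) (psub p q).
Proof. unfold trans. crush. ring. Qed.

Lemma perp_space (x u : pt): eta u u > 0 -> eta x u = 0 -> x <> mkpt 0 0 0 0 -> eta x x < 0.
Proof.
  intros Hu Hx Hn. destruct (Rlt_le_dec (eta x x) 0) as [h|h]; auto. exfalso. apply Hn.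
  destruct x as [x0 x1 x2 x3], u as [u0 u1 u2 u3]; unfold eta in *; simpl in *.
  assert (L: (x1*u1+x2*u2+x3*u3)^2 <= (x1^2+x2^2+x3^2)*(u1^2+u2^2+u3^2)).
  { assert (0 <= (x1*u2-x2*u1)^2 + (x1*u3-x3*u1)^2 + (x2*u3-x3*u2)^2).
    { repeat apply Rplus_le_le_0_compat; apply pow2_ge_0. }
    assert (I: (x1^2+x2^2+x3^2)*(u1^2+u2^2+u3^2) - (x1*u1+x2*u2+x3*u3)^2 =
      (x1*u2-x2*u1)^2 + (x1*u3-x3*u1)^2 + (x2*u3-x3*u2)^2) by ring. lra. }
  assert (E: x0 * u0 = x1*u1+x2*u2+x3*u3) by lra.
  destruct (Req_dec x0 0) as [z|z].
  - subst. assert (x1 = 0) by nra. assert (x2 = 0) by nra. assert (x3 = 0) by nra. subst; reflexivity.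
  - exfalso. rewrite <- E in L. assert (P: 0 < x0^2) by (simpl; nra).
    assert (A1: x1^2+x2^2+x3^2 <= x0^2) by lra.
    assert (A2: u1^2+u2^2+u3^2 < u0^2) by lra.
    assert (B: 0 <= u1^2+u2^2+u3^2) by nra.
    assert (C: (x1^2+x2^2+x3^2)*(u1^2+u2^2+u3^2) <= x0^2*(u1^2+u2^2+u3^2)) by nra.
    assert (D: x0^2*(u1^2+u2^2+u3^2) < x0^2 * u0^2) by nra.
    assert (F: (x0*u0)^2 = x0^2*u0^2) by ring. lra.
Qed.

Lemma inG (a u : pt) f finv k : k > 0 ->
  (forall x, f (finv x) = x) -> (forall x, finv (f x) = x) ->
  (forall p q, eta (psub (f p) (f q)) (psub (f p) (f q)) = k * eta (psub p q) (psub p q)) ->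
  (forall p, line a u p -> line a u (f p)) -> (forall p, line a u p -> line a u (finv p)) ->
  AutC_X (line a u) f.
Proof.
  intros Hk H1 H2 He Hl1 Hl2. split; [split|split].
  - split.
    + intros x y E. rewrite <- (H2 x), <- (H2 y), E; reflexivity.
    + intros y; exists (finv y); auto.
  - intros p q; unfold causal; rewrite He. split; intros; nra.
  - auto.
  - intros q Hq. exists (finv q); auto.
Qed.

Lemma dil_line a u c l z : line a u c -> line a u z -> line a u (dil c l z).
Proof. intros [t0 ->] [t ->]. exists (t0 + l*(t - t0)). unfold dil; crush.
  apply pt_eq; simpl; ring. Qed.

Lemma trans_line a u t z : line a u z -> line a u (trans (pscale t u) z).
Proof. intros [t1 ->]. exists (t1 + t). unfold trans; crush. apply pt_eq; simpl; ring. Qed.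

Lemma reflu_line a u c z : eta u u <> 0 -> line a u z -> line a u (refl c u z).
Proof. intros Hu [t ->]. exists (t - 2 * eta (psub (padd a (pscale t u)) c) u / eta u u).
  unfold refl. crush. apply pt_eq; simpl; field; auto. Qed.

Lemma dil_G a u c l : line a u c -> l <> 0 -> AutC_X (line a u) (dil c l).
Proof.
  intros Hc Hl. apply (inG a u (dil c l) (dil c (/l)) (l*l)).
  - nra.
  - intros; apply dil_invol; auto.
  - intros x. pose proof (dil_invol c (/l) x (Rinv_neq_0_compat _ Hl)) as H.
    rewrite Rinv_inv in H; exact H.
  - apply dil_eta.
  - intros; apply dil_line; auto.
  - intros; apply dil_line; auto.
Qed.

Lemma trans_G a u t : AutC_X (line a u) (trans (pscale t u)).
Proof.
  apply (inG a u _ (trans (pscale (-1) (pscale t u))) 1).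
  - lra.
  - intros; apply trans_invol.
  - intros; apply trans_invol'.
  - apply trans_eta.
  - intros; apply trans_line; auto.
  - intros p [t1 ->]. exists (t1 - t). unfold trans; crush. apply pt_eq; simpl; ring.
Qed.

Lemma reflu_G a u c : eta u u <> 0 -> AutC_X (line a u) (refl c u).
Proof.
  intros Hu. apply (inG a u _ (refl c u) 1).
  - lra.
  - intros; apply refl_invol; auto.
  - intros; apply refl_invol; auto.
  - intros; apply refl_eta; auto.
  - intros; apply reflu_line; auto.
  - intros; apply reflu_line; auto.
Qed.

Lemma refln_fix a u c n z : line a u c -> eta n u = 0 -> line a u z -> refl c n z = z.
Proof.
  intros [t0 ->] Hn [t ->]. unfold refl.
  assert (E: eta (psub (padd a (pscale t u)) (padd a (pscale t0 u))) n = (t - t0) * eta n u)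
    by (crush; ring).
  rewrite E, Hn. replace (2 * ((t - t0) * 0) / eta n n) with 0 by (unfold Rdiv; ring). crush. apply pt_eq; simpl; ring.
Qed.

Lemma refln_G a u c n : line a u c -> eta n u = 0 -> eta n n <> 0 -> AutC_X (line a u) (refl c n).
Proof.
  intros Hc Hn Hnn. apply (inG a u _ (refl c n) 1).
  - lra.
  - intros; apply refl_invol; auto.
  - intros; apply refl_invol; auto.
  - intros; apply refl_eta; auto.
  - intros p Hp. rewrite (refln_fix a u c n p); auto.
  - intros p Hp. rewrite (refln_fix a u c n p); auto.
Qed.

Definition proj (a u r : pt) := padd a (pscale (eta (psub r a) u / eta u u) u).

Lemma proj_line a u r : line a u (proj a u r).
Proof. eexists; reflexivity. Qed.

Lemma proj_perp a u r : eta u u <> 0 -> eta (psub r (proj a u r)) u = 0.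
Proof. intros H. unfold proj. crush. field; auto. Qed.

Lemma padd_psub c r : padd c (psub r c) = r.
Proof. crush. apply pt_eq; simpl; ring. Qed.

Lemma padd0 c : padd c (mkpt 0 0 0 0) = c.
Proof. crush. apply pt_eq; simpl; ring. Qed.

Lemma refl_swap c w v: eta w w = eta v v -> eta (psub w v) (psub w v) <> 0 ->
  refl c (psub w v) (padd c w) = padd c v.
Proof.
  intros E N. unfold refl.
  assert (C: 2 * eta (psub (padd c w) c) (psub w v) / eta (psub w v) (psub w v) = 1).
  { assert (2 * eta (psub (padd c w) c) (psub w v) = eta (psub w v) (psub w v)).
    { revert E; crush; intros; nra. }
    rewrite H. field; auto. }
  rewrite C. crush. apply pt_eq; simpl; ring.
Qed.

Lemma dil_fix c l : dil c l c = c.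
Proof. unfold dil; crush; apply pt_eq; simpl; ring. Qed.
Lemma dil_padd c k w : dil c k (padd c w) = padd c (pscale k w).
Proof. unfold dil; crush; apply pt_eq; simpl; ring. Qed.
Lemma dil_line_pt a u tx ty tz l : l * (ty - tx) = tz - tx ->
  dil (padd a (pscale tx u)) l (padd a (pscale ty u)) = padd a (pscale tz u).
Proof. intros H. unfold dil; crush; apply pt_eq; simpl; nra. Qed.
Lemma eta_scale k w : eta (pscale k w) (pscale k w) = k * k * eta w w.
Proof. crush; ring. Qed.
Lemma eta_scale_l k w u : eta (pscale k w) u = k * eta w u.
Proof. crush; ring. Qed.
Lemma eta_psub_l x y u : eta (psub x y) u = eta x u - eta y u.
Proof. crush; ring. Qed.
Lemma psub_zero x y : psub x y = mkpt 0 0 0 0 -> x = y.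
Proof. crush. intros h; injection h; intros; apply pt_eq; simpl; lra. Qed.
Lemma trans_line_pt a u t t' : trans (pscale (t' - t) u) (padd a (pscale t u)) = padd a (pscale t' u).
Proof. unfold trans; crush; apply pt_eq; simpl; ring. Qed.
Lemma trans_padd s c v : trans s (padd c v) = padd (trans s c) v.
Proof. unfold trans; crush; apply pt_eq; simpl; ring. Qed.
Lemma refl_perp_fix c u q : eta (psub q c) u = 0 -> refl c u q = q.
Proof. intros H. unfold refl. rewrite H. replace (2 * 0 / eta u u) with 0 by (unfold Rdiv; ring).
  crush. apply pt_eq; simpl; ring. Qed.
Lemma line_diff a u tp tc : eta (psub (padd a (pscale tp u)) (padd a (pscale tc u))) u = (tp - tc) * eta u u.
Proof. crush; ring. Qed.
Lemma refl_line_diff a u tp tc : eta u u <> 0 ->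
  eta (psub (refl (padd a (pscale tc u)) u (padd a (pscale tp u))) (padd a (pscale tc u))) u = (tc - tp) * eta u u.
Proof. intros K. unfold refl. crush. field; auto. Qed.

Section Main.
Variables (a u : pt) (S : pt -> pt -> Prop).
Hypothesis Hu : eta u u > 0.
Hypothesis Heq : equivalence_rel S.
Hypothesis Hinv : invariant (AutC_X (line a u)) S.

Let Srefl : forall p, S p p. Proof. apply Heq. Qed.
Let Ssym : forall p q, S p q -> S q p. Proof. apply Heq. Qed.
Let Strans : forall p q r, S p q -> S q r -> S p r. Proof. apply Heq. Qed.

Lemma LB x y : line a u x -> line a u y -> x <> y -> S x y ->
  forall z1 z2, line a u z1 -> line a u z2 -> S z1 z2.
Proof.
  intros Hx Hy Hxy Sxy.
  assert (K: forall z, line a u z -> S x z).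
  { intros z Hz. destruct Hx as [tx Ex], Hy as [ty Ey], Hz as [tz Ez].
    destruct (Req_dec tz tx) as [e|e].
    - subst. apply Srefl.
    - assert (ty <> tx) by (intro; subst; apply Hxy; reflexivity).
      set (l := (tz - tx)/(ty - tx)).
      assert (Hl: l <> 0). { intro h. apply e.
        assert (h2: tz - tx = l * (ty - tx)) by (unfold l; field; lra). rewrite h in h2. lra. }
      assert (Gd := dil_G a u x l (ex_intro _ tx Ex) Hl).
      apply (Hinv _ Gd) in Sxy.
      rewrite dil_fix in Sxy.
      replace (dil x l y) with z in Sxy; auto.
      rewrite Ex, Ey, Ez. clear Sxy Gd Hxy Ex Ey Ez. unfold dil.
      assert (Hl2 : l * (ty - tx) = tz - tx) by (unfold l; field; lra).
      symmetry; apply dil_line_pt; auto. }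
  intros z1 z2 H1 H2. apply Strans with x; auto.
Qed.

Lemma LC c w : line a u c -> eta w u = 0 -> w <> mkpt 0 0 0 0 -> S c (padd c w) ->
  forall c' v, line a u c' -> eta v u = 0 -> S c' (padd c' v).
Proof.
  intros Hc Hw Hw0 Scw.
  assert (St1: forall v, eta v u = 0 -> S c (padd c v)).
  { intros v Hv. destruct (classic (v = mkpt 0 0 0 0)) as [e|e].
    { subst. rewrite padd0. apply Srefl. }
    assert (ew := perp_space w u Hu Hw Hw0).
    assert (ev := perp_space v u Hu Hv e).
    assert (r : 0 < eta v v / eta w w).
    { replace (eta v v / eta w w) with ((- eta v v) / (- eta w w)) by (field; lra).
      apply Rdiv_lt_0_compat; lra. }
    set (k := sqrt (eta v v / eta w w)).
    assert (kp : 0 < k) by (apply sqrt_lt_R0; auto).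
    assert (kk : k * k * eta w w = eta v v).
    { unfold k. rewrite sqrt_sqrt by lra. field; lra. }
    clearbody k.
    set (w' := pscale k w).
    assert (Sw' : S c (padd c w')).
    { assert (Gd := dil_G a u c k Hc ltac:(lra)).
      apply (Hinv _ Gd) in Scw.
      rewrite dil_fix, dil_padd in Scw. exact Scw. }
    assert (Ew' : eta w' w' = eta v v).
    { rewrite <- kk. unfold w'. apply eta_scale. }
    assert (Pw' : eta w' u = 0).
    { unfold w'. rewrite eta_scale_l, Hw. ring. }
    destruct (classic (w' = v)) as [e2|e2].
    { rewrite <- e2; auto. }
    set (n := psub w' v).
    assert (Pn : eta n u = 0). { unfold n. rewrite eta_psub_l, Pw', Hv. ring. }
    assert (Nn : n <> mkpt 0 0 0 0).
    { unfold n. intro h. apply e2. apply psub_zero; auto. }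
    assert (Nnn := perp_space n u Hu Pn Nn).
    assert (Gr := refln_G a u c n Hc Pn ltac:(lra)).
    apply (Hinv _ Gr) in Sw'.
    rewrite (refln_fix a u c n c Hc Pn Hc) in Sw'.
    unfold n in Sw'. rewrite refl_swap in Sw'; auto. fold n; lra. }
  intros c' v Hc' Hv.
  destruct Hc as [t Ec], Hc' as [t' Ec'].
  assert (Gt := trans_G a u (t' - t)).
  specialize (St1 v Hv). apply (Hinv _ Gt) in St1.
  rewrite trans_padd in St1. rewrite Ec, trans_line_pt in St1. rewrite Ec'. exact St1.
Qed.

End Main.

Lemma eta_split s r c u : eta (psub s c) u = eta (psub s r) u + eta (psub r c) u.
Proof. crush. ring. Qed.

Theorem theorem7 (a u : pt) (S : pt -> pt -> Prop) :
  timelike u ->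
  equivalence_rel S ->
  invariant (AutC_X (line a u)) S ->
  nontrivial S ->
  (exists p q, line a u p /\ ~ line a u q /\ S p q) ->
  forall r s, S r s <-> eta (psub s r) u = 0.
Proof.
  intros Hu Heq Hinv [Hnt1 _] [p [q [Hp [Hq Spq]]]].
  unfold timelike in Hu.
  assert (K : eta u u <> 0) by lra.
  destruct Heq as [Srefl [Ssym Strans]].
  set (c := proj a u q).
  assert (Hc : line a u c) by apply proj_line.
  set (w := psub q c).
  assert (Hw : eta w u = 0) by (apply proj_perp; auto).
  assert (Eq : padd c w = q) by apply padd_psub.
  assert (Hw0 : w <> mkpt 0 0 0 0).
  { intro h. apply Hq. rewrite <- Eq, h, padd0. auto. }
  assert (Scq : S c (padd c w)).
  { rewrite Eq.
    assert (G := reflu_G a u c K).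
    pose proof Spq as S2. apply (Hinv _ G) in S2.
    assert (Fq : refl c u q = q) by (apply refl_perp_fix; auto).
    rewrite Fq in S2.
    destruct (classic (p = c)) as [e|e].
    { rewrite <- e; auto. }
    assert (Spp : S p (refl c u p)) by eauto.
    assert (Hne : p <> refl c u p).
    { intro h. destruct Hp as [tp Ep], Hc as [tc Ec]. pose proof Ec as Ec0.
      assert (h2 : eta (psub p c) u = eta (psub (refl c u p) c) u) by (rewrite <- h; auto).
      assert (A1 : eta (psub p c) u = (tp - tc) * eta u u) by (rewrite Ep, Ec; apply line_diff).
      assert (A2 : eta (psub (refl c u p) c) u = (tc - tp) * eta u u).
      { rewrite Ep, Ec. apply refl_line_diff; auto. }
      apply e. assert (tp = tc) by nra. rewrite Ep, Ec0. subst tp. reflexivity. }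
    assert (Spc := LB a u S (conj Srefl (conj Ssym Strans)) Hinv p (refl c u p) Hp
                     (reflu_line a u c p K Hp) Hne Spp p c Hp Hc).
    eauto. }
  assert (Hall := LC a u S Hu (conj Srefl (conj Ssym Strans)) Hinv c w Hc Hw Hw0 Scq).
  assert (Sproj : forall r, S (proj a u r) r).
  { intros r. rewrite <- (padd_psub (proj a u r) r) at 2.
    apply Hall; [apply proj_line | apply proj_perp; auto]. }
  intros r s. split.
  - intros Srs. destruct (Req_dec (eta (psub s r) u) 0) as [e|e]; auto. exfalso.
    apply Hnt1.
    assert (Hne : proj a u r <> proj a u s).
    { intro h. apply e. pose proof (eta_split s r (proj a u r)) as E1.
      pose proof (proj_perp a u s K) as P1; rewrite <- h in P1.
      pose proof (proj_perp a u r K) as P2. specialize (E1 u). lra. }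
    assert (Sc : S (proj a u r) (proj a u s)) by eauto.
    assert (AllX := LB a u S (conj Srefl (conj Ssym Strans)) Hinv _ _ (proj_line a u r)
                     (proj_line a u s) Hne Sc).
    intros r' s'. specialize (AllX _ _ (proj_line a u r') (proj_line a u s')). eauto.
  - intros E. apply Strans with (proj a u r); [eauto|].
    rewrite <- (padd_psub (proj a u r) s). apply Hall; [apply proj_line|].
    rewrite (eta_split s r (proj a u r) u), E, (proj_perp a u r K). lra.
Qed.
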